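(* Consider the two-evaluator model described in the context with $d=2$ attributes, fraction of disadvantaged applicants $\alpha=1/2$, $\lambda=1$ (both attributes protected) and bias factor $\beta=0$. Let $X^{\max}_D=\max_{i\in\mathcal I_D}x_i$ and $X^{\max}_A=\max_{i\in\mathcal I_A}x_i$. Then for every $\gamma\in(0,1)$, $$\mathrm{err}_{\mathrm{hol}}-\mathrm{err}_{\mathrm{seg}}=\frac{\gamma(1-\gamma)}{2}\Big[4\,\mathbb P\big(X^{\max}_D>2X^{\max}_A\big)-1\Big].$$ Consequently, for every $\gamma\in(0,1)$, $\mathrm{err}_{\mathrm{seg}}<\mathrm{err}_{\mathrm{hol}}$ if and only if $\mathbb P\big(X^{\max}_D>2X^{\max}_A\big)>1/4$; this condition depends only on $n$ and $\mathcal D$.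
   Context: Model. There are $n$ applicants (with $n$ even) and $d=2$ attributes. A fixed set $\mathcal I_D\subseteq[n]$ of $n/2$ applicants is ''disadvantaged''; the remaining set $\mathcal I_A=[n]\setminus\mathcal I_D$ is ''advantaged''. The two attributes of each applicant have identical true value: $x_{i1}=x_{i2}=:x_i$, where $x_1,\dots,x_n$ are i.i.d. from a continuous distribution $\mathcal D$ supported on $[0,\infty)$. A fraction $\lambda$ of the attributes are ''protected'' (for $d=2$: $\lambda=1/2$ means a specified one of the two attributes is protected, $\lambda=1$ means both are). There are two evaluators; each is independently ''biased'' with probability $\gamma$, independently of everything else. An unbiased evaluator assigned attribute $j$ of applicant $i$ reports $y_{ij}=x_{ij}$; a biased evaluator reports $y_{ij}=\beta x_{ij}$ if $j$ is protected and $i\in\mathcal I_D$, and $y_{ij}=x_{ij}$ otherwise, where $\beta\in[0,1)$. Each (applicant, attribute) pair is evaluated by exactly one evaluator. Holistic allocation: the applicants are split uniformly at random into two sets of size $n/2$, and each evaluator evaluates both attributes of the applicants in one set. Segmented allocation: uniformly at random, one evaluator evaluates attribute 1 of all applicants and the other evaluates attribute 2 of all applicants. Assignments are independent of the values and of which evaluators are biased. The top-1 error of an allocation scheme is $\mathrm{err}=\mathbb P\big(\arg\max_{i\in[n]} x_i\neq \arg\max_{i\in[n]}(y_{i1}+y_{i2})\big)$ under that scheme; $\mathrm{err}_{\mathrm{hol}}$ and $\mathrm{err}_{\mathrm{seg}}$ denote the errors under holistic and segmented allocation. *)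

(* Defs.v *)
From HB Require Import structures.
From mathcomp Require Import all_boot all_order all_algebra.
From mathcomp Require Import all_classical all_reals all_analysis.
Set Implicit Arguments. Unset Strict Implicit. Unset Printing Implicit Defensive.
Import Order.TTheory GRing.Theory Num.Theory.
Import numFieldNormedType.Exports.
Local Open Scope classical_set_scope.
Local Open Scope ring_scope.

Section Model.
Variables (d : measure_display) (T : measurableType d) (R : realType).
Variable (P : probability T R).
Variable (n : nat).

Definition prob (A : set T) : R := fine (P A).

Definition mutually_independent (X : 'I_n -> {RV P >-> R}) : Prop :=
  forall B : 'I_n -> set R, (forall i, measurable (B i)) ->
    prob (\bigcap_(i in [set: 'I_n]) (X i @^-1` B i)) = \prod_(i < n) prob (X i @^-1` B i).

Definition iid_with_law (X : 'I_n -> {RV P >-> R}) (D : probability R R) : Prop :=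
  mutually_independent X /\
  forall i (A : set R), measurable A -> distribution P (X i) A = D A.

Definition continuous_law_nonneg (D : probability R R) : Prop :=
  (forall r : R, D [set r] = 0%E) /\ D `[0, +oo[%classic = 1%E.

Definition is_argmax (f : 'I_n -> R) (i : 'I_n) : Prop :=
  forall j, j != i -> f j < f i.

(* Evaluators are indexed by bool, attributes by 'I_2.
   [alloc i j] is the evaluator of attribute j of applicant i;
   [biased e] says evaluator e is biased; [prot j] says attribute j is protected. *)
Definition report (beta : R) (ID : {set 'I_n}) (prot : 'I_2 -> bool)
  (biased : bool -> bool) (alloc : 'I_n -> 'I_2 -> bool)
  (i : 'I_n) (j : 'I_2) (v : R) : R :=
  if [&& biased (alloc i j), prot j & i \in ID] then beta * v else v.

(* total reported score y_i1 + y_i2, where x_i1 = x_i2 = x_i *)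
Definition score beta ID prot biased alloc (x : 'I_n -> R) (i : 'I_n) : R :=
  \sum_(j < 2) report beta ID prot biased alloc i j (x i).

Definition err_event beta ID prot biased alloc (X : 'I_n -> {RV P >-> R}) : set T :=
  [set w | ~ exists i, is_argmax (fun k => X k w) i /\
                      is_argmax (score beta ID prot biased alloc (fun k => X k w)) i].

Definition bias_weight (gamma : R) (biased : {ffun bool -> bool}) : R :=
  \prod_(e : bool) (if biased e then gamma else 1 - gamma).

(* holistic: evaluator [false] gets both attributes of applicants in S,
   evaluator [true] those of the complement; S uniform among (n/2)-subsets *)
Definition hol_alloc (S : {set 'I_n}) : 'I_n -> 'I_2 -> bool :=
  fun i _ => i \notin S.

(* segmented: if c, evaluator [false] gets attribute 0 and [true] attribute 1;
   otherwise the reverse; c uniform *)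
Definition seg_alloc (c : bool) : 'I_n -> 'I_2 -> bool :=
  fun _ j => if c then (j != ord0) else (j == ord0).

Definition err_hol beta gamma ID prot X : R :=
  \sum_(b : {ffun bool -> bool}) bias_weight gamma b *
    ((#|[set S : {set 'I_n} | #|S| == n./2]|%:R)^-1 *
     \sum_(S : {set 'I_n} | #|S| == n./2)
        prob (err_event beta ID prot b (hol_alloc S) X)).

Definition err_seg beta gamma ID prot X : R :=
  \sum_(b : {ffun bool -> bool}) bias_weight gamma b *
    (2^-1 * \sum_(c : bool) prob (err_event beta ID prot b (seg_alloc c) X)).

Definition maxD_gt_2maxA (ID : {set 'I_n}) (X : 'I_n -> {RV P >-> R}) : set T :=
  (* since ID and its complement are finite and nonempty, max_D > 2 max_A
     iff some i in ID beats 2 * x_k for every k outside ID *)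
  [set w | exists i, i \in ID /\ forall k, k \notin ID -> 2 * X k w < X i w].

End Model.

(* Main.v *)
Require Import Defs.
From HB Require Import structures.
From mathcomp Require Import all_boot all_order all_algebra.
From mathcomp Require Import fingroup perm.
From mathcomp Require Import all_classical all_reals all_analysis.
From mathcomp Require Import measurable_realfun.
From mathcomp Require Import ring lra.
Import Order.TTheory GRing.Theory Num.Theory.
Local Open Scope classical_set_scope.
Local Open Scope ring_scope.
Set Implicit Arguments. Unset Strict Implicit. Unset Printing Implicit Defensive.
Section Gen.
Context d (T : measurableType d) (R : realType) (P : probability T R).
Notation pr := (prob P).

Lemma probE A : measurable A -> P A = (pr A)%:E.
Proof.
move=> mA; rewrite /prob fineK // ge0_fin_numE ?measure_ge0 //.
by rewrite (le_lt_trans (probability_le1 _ mA)) // ltry.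
Qed.

Lemma prob_ge0 A : 0 <= pr A.
Proof. by rewrite /prob fine_ge0 // measure_ge0. Qed.

Lemma prob_setT : pr setT = 1.
Proof. by rewrite /prob probability_setT. Qed.

Lemma probU A B : measurable A -> measurable B -> A `&` B = set0 ->
  pr (A `|` B) = pr A + pr B.
Proof.
move=> mA mB AB; apply: EFin_inj; rewrite EFinD -!probE //; last exact: measurableU.
by rewrite measureU.
Qed.

Lemma prob_le A B : measurable A -> measurable B -> A `<=` B -> pr A <= pr B.
Proof.
move=> mA mB AB; rewrite -lee_fin -!probE //.
by apply: le_measure => //; rewrite inE.
Qed.

Lemma prob_null_eq A B N : measurable A -> measurable B -> measurable N ->
  pr N = 0 -> A `&` ~` N = B `&` ~` N -> pr A = pr B.
Proof.
move=> mA mB mN N0 E.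
have key C : measurable C -> pr C = pr (C `&` ~` N).
  move=> mC.
  rewrite {1}(_ : C = (C `&` ~` N) `|` (C `&` N)); last first.
    by rewrite -setIUr setUCl setIT.
  rewrite probU; first last.
  - by rewrite setIACA setICl setI0.
  - exact: measurableI.
  - by apply: measurableI => //; exact: measurableC.
  suff -> : pr (C `&` N) = 0 by rewrite addr0.
  apply/eqP; rewrite eq_le prob_ge0 andbT -N0.
  by apply: prob_le => //; exact: measurableI.

by rewrite (key A mA) (key B mB) E.
Qed.

Lemma prob_nullU A B : measurable A -> measurable B -> pr A = 0 -> pr B = 0 ->
  pr (A `|` B) = 0.
Proof.
move=> mA mB A0 B0.
have mBA : measurable (B `&` ~` A) by apply: measurableI => //; exact: measurableC.
have -> : A `|` B = A `|` (B `&` ~` A).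
  by rewrite setUIr setUCr setIT.
rewrite probU //; last by rewrite setICA setICr setI0.
rewrite A0 add0r; apply/eqP; rewrite eq_le prob_ge0 andbT -B0.
by apply: prob_le => //; exact: subIsetl.
Qed.

Definition U (I : eqType) (s : seq I) (F : I -> set T) :=
  [set w | exists2 i, i \in s & F i w].

Lemma U_nil (I : eqType) (F : I -> set T) : U [::] F = set0.
Proof. by apply/seteqP; split => w // [i]. Qed.

Lemma U_cons (I : eqType) x s (F : I -> set T) : U (x :: s) F = F x `|` U s F.
Proof.
apply/seteqP; split => w.
  by case=> i; rewrite inE => /orP[/eqP->|iS Fi]; [left|right; exists i].
by case=> [Fx|[i iS Fi]]; [exists x; rewrite ?mem_head|exists i; rewrite // inE iS orbT].
Qed.

Lemma U_meas (I : eqType) s (F : I -> set T) :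
  (forall i, measurable (F i)) -> measurable (U s F).
Proof.
move=> mF; elim: s => [|x s IH]; first by rewrite U_nil.
by rewrite U_cons; exact: measurableU.
Qed.

Lemma U_null (I : eqType) s (F : I -> set T) :
  (forall i, measurable (F i)) -> (forall i, pr (F i) = 0) -> pr (U s F) = 0.
Proof.
move=> mF F0; elim: s => [|x s IH].
  by rewrite U_nil /prob measure0.
by rewrite U_cons prob_nullU //; exact: U_meas.
Qed.

Lemma U_sum (I : eqType) s (F : I -> set T) :
  (forall i, measurable (F i)) ->
  (forall i j, i != j -> F i `&` F j = set0) -> uniq s ->
  pr (U s F) = \sum_(i <- s) pr (F i).
Proof.
move=> mF dF; elim: s => [|x s IH]; first by rewrite U_nil big_nil /prob measure0.
move=> /= /andP[xs us]; rewrite U_cons big_cons probU //; first by rewrite IH.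
- exact: U_meas.
apply/seteqP; split => // w [Fx [i iS Fi]].
have xi : x != i by apply: contraNneq xs => ->.
by rewrite -(dF _ _ xi); split.
Qed.

Lemma U_enum (I : finType) (F : I -> set T) : [set w | exists i, F i w] = U (enum I) F.
Proof.
by apply/seteqP; split => w [i]; [exists i; rewrite ?mem_enum|exists i].
Qed.

Lemma meas_exists (I : finType) (F : I -> set T) :
  (forall i, measurable (F i)) -> measurable [set w | exists i, F i w].
Proof. by move=> mF; rewrite U_enum; exact: U_meas. Qed.

Lemma meas_forall (I : finType) (F : I -> set T) :
  (forall i, measurable (F i)) -> measurable [set w | forall i, F i w].
Proof.
move=> mF.
have -> : [set w | forall i, F i w] = ~` [set w | exists i, (~` F i) w].
  apply/seteqP; split => w.
    by move=> H [i /= ]; apply.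
  move=> /= H i; apply/not_notP => Hn; apply: H; by exists i.
by apply: measurableC; apply: meas_exists => i; exact: measurableC.
Qed.

End Gen.
Section Model.
Context d (T : measurableType d) (R : realType) (P : probability T R).
Context (n : nat) (D : probability R R) (X : 'I_n -> {RV P >-> R}).
Hypothesis hX : iid_with_law X D.
Notation pr := (prob P).

Lemma mX i : measurable_fun setT (X i).
Proof. exact: measurable_funP. Qed.

Lemma mXpre i A : measurable A -> measurable (X i @^-1` A).
Proof. by move=> mA; exact: measurable_funPTI. Qed.

Lemma lawX i A : measurable A -> P (X i @^-1` A) = D A.
Proof. by move=> mA; case: hX => _ H; rewrite -(H i A mA). Qed.

Lemma rectX (B : 'I_n -> set R) : (forall k, measurable (B k)) ->
  pr [set w | forall k, B k (X k w)] = \prod_(k < n) fine (D (B k)).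
Proof.
move=> mB; have [hI _] := hX.
have -> : [set w | forall k, B k (X k w)] = \bigcap_(i in [set: 'I_n]) (X i @^-1` B i).
  by apply/seteqP; split => w /= H i; [move=> _|]; apply: H.
rewrite hI //; apply: eq_bigr => i _; by rewrite /prob lawX.
Qed.

Definition rect (B : 'I_n -> set R) : set (n.-tuple R) :=
  [set t | forall k, B k (tnth t k)].

Definition Grect : set (set (n.-tuple R)) :=
  [set A | exists B, (forall k, measurable (B k)) /\ A = rect B].

Lemma rect_meas B : (forall k, measurable (B k)) -> measurable (rect B).
Proof.
move=> mB.
have -> : rect B = [set t | forall k, ((@tnth n R)^~ k @^-1` B k) t] by [].
apply: meas_forall => k.
by rewrite -[X in measurable X]setTI; apply: measurable_tnth.
Qed.

Lemma Grect_gen : (measurable : set (set (n.-tuple R))) = <<s Grect >>.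
Proof.
apply/seteqP; split.
  apply: smallest_sub; first exact: smallest_sigma_algebra.
  move=> A; rewrite -bigcup_seq => -[i _ [Y mY <-]].
  apply: sub_sigma_algebra.
  exists (fun k => if k == i then Y else setT); split.
    by move=> k; case: ifP.
  apply/seteqP; split => t /=.
    by move=> [_ Yt] k; case: eqP => [->|].
  by move=> H; split => //; move: (H i); rewrite eqxx.
apply: smallest_sub; first exact: sigma_algebra_measurable.
by move=> A [B [mB ->]]; exact: rect_meas.
Qed.

Definition Xt (s : {perm 'I_n}) (w : T) : n.-tuple R := [tuple X (s k) w | k < n].

Lemma mXt s : measurable_fun setT (Xt s).
Proof.
apply/measurable_fun_tnthP => i.
have -> : (@tnth n R)^~ i \o Xt s = X (s i).
  by apply/funext => w /=; rewrite tnth_mktuple.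
exact: mX.
Qed.

Lemma Xt_rect s B : (forall k, measurable (B k)) ->
  P (Xt s @^-1` rect B) = (\prod_(k < n) fine (D (B k)))%:E.
Proof.
move=> mB.
have -> : Xt s @^-1` rect B = [set w | forall k, B ((s^-1)%g k) (X k w)].
  apply/seteqP; split => w /= H k.
    by have := H (s^-1 k)%g; rewrite tnth_mktuple permKV.
  by rewrite tnth_mktuple; have := H (s k); rewrite /= permK.
rewrite probE; last by apply: meas_forall => k; apply: mXpre.
rewrite (rectX (B := fun k => B ((s^-1)%g k))); last by move=> k; apply: mB.
congr (_%:E); rewrite (reindex_inj (@perm_inj _ s)) /=.
by apply: eq_bigr => k _; rewrite permK.
Qed.

Lemma exch (s : {perm 'I_n}) A : measurable A ->
  P (Xt 1%g @^-1` A) = P (Xt s @^-1` A).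
Proof.
move=> mA.
pose F1 : {mfun T >-> n.-tuple R} := HB.pack (Xt 1%g) (isMeasurableFun.Build _ _ _ _ _ (mXt 1%g)).
pose F2 : {mfun T >-> n.-tuple R} := HB.pack (Xt s) (isMeasurableFun.Build _ _ _ _ _ (mXt s)).
have := @measure_unique _ R _ Grect (fun _ => setT) Grect_gen _ _ _
  (distribution P F1) (distribution P F2) _ _ A mA.
apply.
- move=> _ _ [B1 [mB1 ->]] [B2 [mB2 ->]].
  exists (fun k => B1 k `&` B2 k); split; first by move=> k; exact: measurableI.
  by apply/seteqP; split => t /=; [move=> [H1 H2] k|move=> H; split => k; case: (H k)].
- move=> _; exists (fun _ => setT); split => //.
  by apply/seteqP; split.
- by rewrite bigcup_const.
- move=> _ [B [mB ->]].
  change (P (Xt 1%g @^-1` rect B) = P (Xt s @^-1` rect B)).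
  by rewrite !Xt_rect.
- by move=> _; change (P (Xt 1%g @^-1` setT) < +oo)%E; rewrite preimage_setT probability_setT ltry.
Qed.

End Model.
Section Ties.
Context d (T : measurableType d) (R : realType) (P : probability T R).
Context (n : nat) (D : probability R R) (X : 'I_n -> {RV P >-> R}).
Hypothesis hX : iid_with_law X D.
Hypothesis hD : continuous_law_nonneg D.
Notation pr := (prob P).

Lemma pair_law i j A B : i != j -> measurable A -> measurable B ->
  pr [set w | A (X i w) /\ B (X j w)] = fine (D A) * fine (D B).
Proof.
move=> ij mA mB.
pose C k := if k == i then A else if k == j then B else setT.
have mC k : measurable (C k) by rewrite /C; case: ifP => //; case: ifP.
have -> : [set w | A (X i w) /\ B (X j w)] = [set w | forall k, C k (X k w)].
  apply/seteqP; split => w /=.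
    move=> [Ai Bj] k; rewrite /C; case: eqP => [->//|_]; case: eqP => [->//|//].
  move=> H; split; first by have := H i; rewrite /C eqxx.
  by have := H j; rewrite /C eq_sym (negbTE ij) eqxx.
rewrite (rectX hX mC) (bigD1 i) //= (bigD1 j) //=; last by rewrite eq_sym.
rewrite big1 ?mulr1; first by rewrite /C eqxx eq_sym (negbTE ij) eqxx.
move=> k /andP[ki kj]; rewrite /C (negbTE ki) (negbTE kj).
by rewrite probability_setT.
Qed.

Lemma tie0 i j : i != j -> pr [set w | X i w = X j w] = 0.
Proof.
move=> ij.
have mF : measurable_fun setT (fun w => (X i w, X j w)).
  by apply: measurable_fun_pair; exact: mX.
pose F : {mfun T >-> (R * R)%type} := HB.pack (fun w => (X i w, X j w))
  (isMeasurableFun.Build _ _ _ _ _ mF).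
pose Dg : set (R * R) := [set p | p.1 - p.2 = 0].
have mDg : measurable Dg.
  rewrite (_ : Dg = (fun p : R * R => p.1 - p.2) @^-1` [set 0]) //.
  rewrite -[X in measurable X]setTI.
  by apply: measurable_funB => //; exact: measurable_set1.
have mpre : measurable [set w | X i w = X j w].
  rewrite (_ : [set w | X i w = X j w] = F @^-1` Dg); last first.
    by apply/seteqP; split => w /= H; [rewrite /Dg /= H subrr|apply/eqP; rewrite -subr_eq0; apply/eqP; exact: H].
  exact: measurable_funPTI.
have := @product_measure_unique _ _ R R R D D (distribution P F) _ Dg mDg.
move=> HU.
have Hpre : P [set w | X i w = X j w] = distribution P F Dg.
  rewrite (_ : [set w | X i w = X j w] = F @^-1` Dg) //.
  by apply/seteqP; split => w /= H; [rewrite /Dg /= H subrr|apply/eqP; rewrite -subr_eq0; apply/eqP; exact: H].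
rewrite /prob Hpre -HU; last first.
  move=> A B mA mB.
  change (P [set w | A (X i w) /\ B (X j w)] = D A * D B)%E.
  rewrite probE; last by apply: (measurableI (X i @^-1` A) (X j @^-1` B)); apply: mXpre.
  rewrite pair_law // -[in RHS](fineK (fin_num_measure D _ mA)).
  by rewrite -[in RHS](fineK (fin_num_measure D _ mB)).
rewrite /product_measure1 /= integral0_eq // => x _ /=.
rewrite (_ : xsection Dg x = [set x]); first by case: hD => ->.
apply/seteqP; split => y; rewrite /xsection /Dg /= inE /=.
  by move/eqP; rewrite subr_eq0 => /eqP ->.
by move=> ->; rewrite subrr.
Qed.

Lemma neg0 i : pr [set w | X i w < 0] = 0.
Proof.
have -> : [set w | X i w < 0] = X i @^-1` (~` `[0, +oo[%classic).
  apply/seteqP; split => w /=; rewrite in_itv /= andbT.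
    by rewrite ltNge => /negP.
  by rewrite ltNge => /negP.
rewrite /prob (lawX hX) //; last exact: measurableC.
by rewrite probability_setC //; case: hD => _ ->; rewrite subee.
Qed.

End Ties.
Lemma ex_max (R : realType) n (f : 'I_n -> R) : (0 < n)%N -> exists i, forall k, f k <= f i.
Proof.
move=> n0; have i0 : 'I_n := Ordinal n0.
case: (@arg_maxP _ R _ i0 xpredT f erefl) => i _ H.
by exists i => k; apply: H.
Qed.

Section Det.
Context (R : realType) (n : nat) (ID : {set 'I_n}).
Hypothesis n0 : (0 < n)%N.
Variable x : 'I_n -> R.
Hypothesis hx : forall i j, i != j -> x i != x j.
Hypothesis hnn : forall i, 0 <= x i.

Lemma ex_argmax : exists i, is_argmax x i.
Proof.
have [i Hi] := ex_max x n0; exists i => k ki.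
by rewrite lt_neqAle Hi hx.
Qed.

Lemma argmax_uniq i j : is_argmax x i -> is_argmax x j -> i = j.
Proof.
move=> Hi Hj; apply/eqP; apply/negPn/negP => ij.
have := Hj _ ij; rewrite eq_sym in ij.
have := Hi _ ij; move=> *; lra.
Qed.

Lemma argmax_le i k : is_argmax x i -> x k <= x i.
Proof.
move=> Hi; have [->|ki] := eqVneq k i; first by [].
by apply/ltW/Hi.
Qed.

Lemma det_seg :
  (~ exists i, is_argmax x i /\ is_argmax (fun k => if k \in ID then x k else x k + x k) i) <->
  ((exists i, i \in ID /\ is_argmax x i) /\
   ~ (exists i, i \in ID /\ forall k, k \notin ID -> 2 * x k < x i)).
Proof.
split.
  move=> H; have [i Hi] := ex_argmax.
  have iID : i \in ID.
    apply/negPn/negP => iID; apply: H; exists i; split => // k ki /=.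
    rewrite (negbTE iID); have := Hi k ki; have := hnn k.
    by case: (k \in ID) => *; lra.
  split; first by exists i.
  move=> [j [jID Hj]]; apply: H; exists i; split => // k ki /=.
  rewrite iID; have := Hi k ki; have := argmax_le k Hi; have := argmax_le j Hi.
  case kID: (k \in ID) => //.
  by have := Hj k (negbT kID) => *; lra.
move=> [[i [iID Hi]] HP] [j [Hj Hs]].
have ji := argmax_uniq Hj Hi; subst j.
apply: HP; exists i; split => // k kID.
have ki : k != i by apply: contraNneq kID => ->.
have := Hs k ki; rewrite /= iID (negbTE kID) => *; lra.
Qed.

Lemma other (i : 'I_n) : (1 < n)%N -> exists k, k != i.
Proof.
move=> n1; case: i => [[|m] hm].
  by exists (Ordinal n1).
by exists (Ordinal n0).
Qed.

Lemma det_hol (B : pred 'I_n) : (1 < n)%N ->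
  (~ exists i, is_argmax x i /\ is_argmax (fun k => if B k then 0 else x k + x k) i) <->
  (exists i, B i /\ is_argmax x i).
Proof.
move=> n1; split.
  move=> H; have [i Hi] := ex_argmax.
  exists i; split => //; apply/negPn/negP => Bi; apply: H; exists i; split => // k ki /=.
  rewrite (negbTE Bi); have := Hi k ki; have := hnn k.
  by case: (B k) => *; lra.
move=> [i [Bi Hi]] [j [Hj Hs]].
have ji := argmax_uniq Hj Hi; subst j.
have [k ki] := other i n1.
have := Hs k ki; have := hnn k; rewrite /= Bi.
by case: (B k) => *; lra.
Qed.

Lemma pev_sub : (exists i, i \in ID /\ forall k, k \notin ID -> 2 * x k < x i) ->
  (exists i, i \in ID /\ is_argmax x i).
Proof.
move=> [i [iID Hi]]; have [j Hj] := ex_argmax.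
exists j; split => //; apply/negPn/negP => jID.
have := Hi j jID; have := argmax_le i Hj; have := hnn j => *; lra.
Qed.

End Det.
Section Scores.
Context (R : realType) (n : nat) (ID : {set 'I_n}).
Notation prot := (fun _ : 'I_2 => true).

Lemma score_gen (b : {ffun bool -> bool}) alloc (x : 'I_n -> R) i :
  score 0 ID prot b alloc x i =
  (if b (alloc i ord0) && (i \in ID) then 0 else x i) +
  (if b (alloc i ord_max) && (i \in ID) then 0 else x i).
Proof.
rewrite /score /report big_ord_recr big_ord1 /= !mul0r.
by rewrite (_ : widen_ord _ ord0 = ord0) //; apply: val_inj.
Qed.

Lemma score_seg (b : {ffun bool -> bool}) c (x : 'I_n -> R) i : b false != b true ->
  score 0 ID prot b (seg_alloc c) x i = if i \in ID then x i else x i + x i.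
Proof.
move=> hb; rewrite score_gen /seg_alloc.
move: hb; case: c => /=; case: (b false); case: (b true) => //= _;
  case: (i \in ID); rewrite ?add0r ?addr0 //.
Qed.

Lemma score_hol (b : {ffun bool -> bool}) S (x : 'I_n -> R) i :
  score 0 ID prot b (hol_alloc S) x i =
  if b (i \notin S) && (i \in ID) then 0 else x i + x i.
Proof. by rewrite score_gen /hol_alloc; case: ifP; rewrite ?addr0. Qed.

Lemma score_const (b : {ffun bool -> bool}) alloc alloc' (x : 'I_n -> R) :
  b false = b true ->
  score 0 ID prot b alloc x = score 0 ID prot b alloc' x.
Proof.
move=> hb; apply/funext => i; rewrite !score_gen.
have E y z : b y = b z by case: y; case: z.
by rewrite (E (alloc i ord0) (alloc' i ord0)) (E (alloc i ord_max) (alloc' i ord_max)).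
Qed.

End Scores.
Section MGen.
Context d (T : measurableType d) (R : realType).

Lemma mlt (f g : T -> R) : measurable_fun setT f -> measurable_fun setT g ->
  measurable [set w | f w < g w].
Proof.
move=> mf mg.
have := @measurable_fun_ltr _ _ _ setT f g mf mg measurableT [set true] I.
by rewrite setTI.
Qed.

Lemma meq (f g : T -> R) : measurable_fun setT f -> measurable_fun setT g ->
  measurable [set w | f w = g w].
Proof.
move=> mf mg.
have -> : [set w | f w = g w] = ~` ([set w | f w < g w] `|` [set w | g w < f w]).
  apply/seteqP; split => w /=.
    by move=> ->; rewrite ltxx; case.
  move=> H; apply/eqP; rewrite eq_le !leNgt; apply/andP; split; apply/negP => H';
    apply: H; [right|left]; exact: H'.
by apply: measurableC; apply: measurableU; apply: mlt.
Qed.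

Lemma m_and (b : bool) (S : set T) : measurable S -> measurable [set w | b /\ S w].
Proof.
move=> mS; case: b.
  by rewrite (_ : [set w | true /\ S w] = S) //; apply/seteqP; split => w //= [].
by rewrite (_ : [set w | false /\ S w] = set0) //; apply/seteqP; split => w //= [].
Qed.

Lemma m_imp (b : bool) (S : set T) : measurable S -> measurable [set w | b -> S w].
Proof.
move=> mS; case: b.
  rewrite (_ : [set w | true -> S w] = S) //; apply/seteqP; split => w //=.
  by move=> H; apply: H.
by rewrite (_ : [set w | false -> S w] = setT) //; apply/seteqP; split => w //=.
Qed.

End MGen.

Section Main.
Context d (T : measurableType d) (R : realType) (P : probability T R).
Context (n : nat) (D : probability R R) (X : 'I_n -> {RV P >-> R}) (ID : {set 'I_n}).
Hypothesis n0 : (0 < n)%N.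
Hypothesis ev : ~~ odd n.
Hypothesis hID : #|ID| = n./2.
Hypothesis hD : continuous_law_nonneg D.
Hypothesis hX : iid_with_law X D.
Notation pr := (prob P).

Definition Aset i := [set w | is_argmax (fun k => X k w) i].

Definition Nset := [set w | exists p : 'I_n * 'I_n, p.1 != p.2 /\ X p.1 w = X p.2 w]
  `|` [set w | exists i, X i w < 0].

Lemma mAset i : measurable (Aset i).
Proof.
have -> : Aset i = [set w | forall k, k != i -> X k w < X i w] by [].
by apply: meas_forall => k; apply: m_imp; apply: mlt; apply: mX.
Qed.

Lemma mNset : measurable Nset.
Proof.
apply: measurableU; apply: meas_exists.
  by move=> p; apply: m_and; apply: meq; apply: mX.
by move=> i; apply: mlt => //; apply: mX.
Qed.

Lemma Nset0 : pr Nset = 0.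
Proof.
apply: prob_nullU.
- by apply: meas_exists => p; apply: m_and; apply: meq; apply: mX.
- by apply: meas_exists => i; apply: mlt => //; apply: mX.
- rewrite U_enum; apply: U_null.
    by move=> p; apply: m_and; apply: meq; apply: mX.
  move=> [i j] /=; case: (eqVneq i j) => [<-|ij].
    rewrite (_ : (fun w => ~~ true /\ _) = set0) ?/prob ?measure0 //.
    by apply/seteqP; split => w // [].
  rewrite (_ : (fun w => ~~ false /\ _) = [set w | X i w = X j w]).
    exact: (tie0 hX hD ij).
  by apply/seteqP; split => w //= [].
- rewrite U_enum; apply: U_null.
    by move=> i; apply: mlt => //; apply: mX.
  move=> i; exact: (neg0 hX hD i).
Qed.

Lemma good w : ~ Nset w ->
  (forall i j, i != j -> X i w != X j w) /\ (forall i, 0 <= X i w).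
Proof.
move=> Hw; split.
  move=> i j ij; apply/eqP => E; apply: Hw; left; by exists (i, j).
move=> i; rewrite leNgt; apply/negP => H; apply: Hw; right; by exists i.
Qed.

Lemma Aset_disj i j : i != j -> Aset i `&` Aset j = set0.
Proof.
move=> ij; apply/seteqP; split => w // [Hi Hj].
have := Hi j; rewrite eq_sym => /(_ ij); have := Hj i ij => *; lra.
Qed.

Lemma Aset_perm i j : pr (Aset i) = pr (Aset j).
Proof.
pose At : set (n.-tuple R) := [set t | forall k, k != i -> tnth t k < tnth t i].
have mAt : measurable At.
  apply: meas_forall => k; apply: m_imp; apply: mlt; apply: measurable_tnth.
pose s := tperm i j.
have E1 : Aset i = Xt X 1%g @^-1` At.
  by apply/seteqP; split => w /= H k; have := H k; rewrite /Xt !tnth_mktuple !perm1.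
have E2 : Aset j = Xt X s @^-1` At.
  apply/seteqP; split => w /= H k.
    rewrite /Xt !tnth_mktuple /s tpermL => ki; apply: H.
    by rewrite /s -[X in _ != X](tpermL i j) (inj_eq (@perm_inj _ _)).
  move=> kj; have := H (s k); rewrite /Xt !tnth_mktuple /s tpermL tpermK; apply.
  by rewrite -[X in _ != X](tpermR i j) (inj_eq (@perm_inj _ _)).
by rewrite /prob E1 E2 (exch hX s mAt).
Qed.

Lemma prA i : pr (Aset i) = n%:R^-1.
Proof.
pose i0 : 'I_n := Ordinal n0.
have H1 : pr [set w | exists i, Aset i w] = 1.
  rewrite -(prob_setT P); apply: (prob_null_eq _ _ mNset Nset0) => //.
  - by apply: meas_exists => k; exact: mAset.
  apply/seteqP; split => w [H1 H2] //; split => //.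
  have [hx hnn] := good H2.
  have [k Hk] := ex_argmax n0 hx.
  by exists k.
rewrite U_enum U_sum ?enum_uniq // in H1; last 2 first.
- exact: mAset.
- exact: Aset_disj.
rewrite big_enum /= (eq_bigr (fun _ => pr (Aset i0))) in H1; last by move=> k _; exact: Aset_perm.
rewrite sumr_const card_ord -mulr_natl in H1.
rewrite (Aset_perm i i0); apply: (mulfI (x := n%:R)).
  by rewrite pnatr_eq0 -lt0n.
by rewrite H1 mulfV // pnatr_eq0 -lt0n.
Qed.

Lemma prB (B : {set 'I_n}) :
  pr [set w | exists i, i \in B /\ Aset i w] = #|B|%:R / n%:R.
Proof.
have -> : [set w | exists i, i \in B /\ Aset i w] = U (enum B) Aset.
  apply/seteqP; split => w [i].
    by move=> [iB Hi]; exists i; rewrite ?mem_enum.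
  by rewrite mem_enum => iB Hi; exists i.
rewrite U_sum ?enum_uniq //; last 2 first.
- exact: mAset.
- exact: Aset_disj.
rewrite big_enum /= (eq_bigr (fun _ => n%:R^-1)); last by move=> k _; exact: prA.
by rewrite sumr_const mulr_natl.
Qed.
Notation prot := (fun _ : 'I_2 => true).

Lemma n_half : (n./2 * 2)%N = n.
Proof. by rewrite muln2 -[RHS](odd_double_half n) (negbTE ev) add0n. Qed.

Lemma n1 : (1 < n)%N.
Proof. by rewrite -n_half; move: n0; rewrite -n_half; case: (n./2). Qed.

Lemma half_n : (n./2)%:R / n%:R = 2^-1 :> R.
Proof.
rewrite -[in n%:R]n_half natrM invfM mulrA mulfV ?mul1r //.
by rewrite pnatr_eq0; move: n0; rewrite -n_half; case: (n./2).
Qed.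

Lemma m_err (sc : 'I_n -> T -> R) : (forall k, measurable_fun setT (sc k)) ->
  measurable [set w | ~ exists i, is_argmax (fun k => X k w) i /\ is_argmax (fun k => sc k w) i].
Proof.
move=> msc; apply: measurableC; apply: meas_exists => i.
apply: (measurableI (Aset i) [set w | forall k, k != i -> sc k w < sc i w] (mAset i)).
by apply: meas_forall => k; apply: m_imp; apply: mlt.
Qed.

Definition QID := [set w | exists i, i \in ID /\ Aset i w].

Lemma mQID : measurable QID.
Proof. by apply: meas_exists => i; apply: m_and; exact: mAset. Qed.

Lemma mPev : measurable (maxD_gt_2maxA ID X).
Proof.
apply: meas_exists => i; apply: m_and; apply: meas_forall => k; apply: m_imp.
apply: mlt; last exact: mX.
by apply: measurable_funM; [exact: measurable_cst|exact: mX].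
Qed.

Lemma err_seg_eq (b : {ffun bool -> bool}) c : b false != b true ->
  err_event 0 ID prot b (seg_alloc c) X =
  [set w | ~ exists i, is_argmax (fun k => X k w) i /\
       is_argmax (fun k => if k \in ID then X k w else X k w + X k w) i].
Proof.
move=> hb; apply/seteqP; split => w; rewrite /err_event /=;
rewrite (_ : score 0 ID prot b (seg_alloc c) (fun k => X k w) =
   (fun k => if k \in ID then X k w else X k w + X k w)) //;
by apply/funext => k; exact: score_seg.
Qed.

Lemma prob_seg (b : {ffun bool -> bool}) c : b false != b true ->
  pr (err_event 0 ID prot b (seg_alloc c) X) = 2^-1 - pr (maxD_gt_2maxA ID X).
Proof.
move=> hb; rewrite err_seg_eq //.
set E := [set w | ~ _].
set Pv := maxD_gt_2maxA ID X.
have mE : measurable E.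
  apply: (m_err (sc := fun k w => if k \in ID then X k w else X k w + X k w)) => k.
  by case: (k \in ID); [exact: mX|apply: measurable_funD; exact: mX].
have mnP : measurable (~` Pv) by apply: measurableC; exact: mPev.
have e1 : pr E = pr (QID `&` ~` Pv).
  apply: (prob_null_eq _ _ mNset Nset0) => //; first exact: measurableI mQID mnP.
  apply/seteqP; split => w [Hw Nw]; split => //; have [hx hnn] := good Nw.
    by have [] := (det_seg ID n0 hx hnn).1 Hw.
  by apply/(det_seg ID n0 hx hnn).
have e2 : pr QID = pr (QID `&` ~` Pv) + pr (QID `&` Pv).
  rewrite -probU //; first by rewrite -setIUr setUCl setIT.
  - exact: measurableI mQID mnP.
  - exact: measurableI mQID mPev.
  by rewrite setIACA setICl setI0.
have e3 : pr (QID `&` Pv) = pr Pv.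
  apply: (prob_null_eq _ _ mNset Nset0) => //; first exact: measurableI mQID mPev.
  - exact: mPev.
  apply/seteqP; split => w [Hw Nw]; split => //; first by case: Hw.
  have [hx hnn] := good Nw; split => //.
  exact: (pev_sub n0 hx hnn).
have e4 : pr QID = 2^-1 by rewrite /QID prB hID half_n.
by rewrite e1; move: e2; rewrite e3 e4 => ->; rewrite addrK.
Qed.

Lemma err_hol_eq (b : {ffun bool -> bool}) S :
  err_event 0 ID prot b (hol_alloc S) X =
  [set w | ~ exists i, is_argmax (fun k => X k w) i /\
       is_argmax (fun k => if b (k \notin S) && (k \in ID) then 0 else X k w + X k w) i].
Proof.
apply/seteqP; split => w; rewrite /err_event /=;
rewrite (_ : score 0 ID prot b (hol_alloc S) (fun k => X k w) =
   (fun k => if b (k \notin S) && (k \in ID) then 0 else X k w + X k w)) //;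
by apply/funext => k; exact: score_hol.
Qed.

Lemma prob_hol (b : {ffun bool -> bool}) S :
  pr (err_event 0 ID prot b (hol_alloc S) X) =
  #|(finset (fun i : 'I_n => b (i \notin S) && (i \in ID)))|%:R / n%:R.
Proof.
transitivity (pr [set w | exists i, i \in (finset (fun i : 'I_n => b (i \notin S) && (i \in ID))) /\ Aset i w]); last exact: prB.
rewrite err_hol_eq.
apply: (prob_null_eq _ _ mNset Nset0).
- apply: (m_err (sc := fun k w => if b (k \notin S) && (k \in ID) then 0 else X k w + X k w)) => k.
  by case: (b (k \notin S) && (k \in ID)); [exact: measurable_cst|apply: measurable_funD; exact: mX].
- by apply: meas_exists => i; apply: m_and; exact: mAset.
apply/seteqP; split => w [Hw Nw]; split => //; have [hx hnn] := good Nw.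
  have [i [Bi Hi]] := (det_hol n0 hx hnn (fun k => b (k \notin S) && (k \in ID)) n1).1 Hw.
  by exists i; rewrite inE.
apply/(det_hol n0 hx hnn (fun k => b (k \notin S) && (k \in ID)) n1).
by case: Hw => i; rewrite inE => -[Bi Hi]; exists i.
Qed.

Definition CS := #|[set S : {set 'I_n} | #|S| == n./2]|.

Lemma sum_constS (c : R) :
  \sum_(S : {set 'I_n} | #|S| == n./2) c = CS%:R * c.
Proof.
rewrite (eq_bigl (fun S => S \in [set S : {set 'I_n} | #|S| == n./2])); last first.
  by move=> S; apply/idP/idP => [h|/set_mem //]; apply/mem_set.
by rewrite sumr_const mulr_natl.
Qed.

Lemma CS_neq0 : CS%:R != 0 :> R.
Proof.
rewrite pnatr_eq0 -lt0n; apply/card_gt0P; exists ID.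
by apply/mem_set; rewrite /= hID.
Qed.

Definition Delta (b : {ffun bool -> bool}) :=
  (CS%:R)^-1 * \sum_(S : {set 'I_n} | #|S| == n./2)
      pr (err_event 0 ID prot b (hol_alloc S) X) -
  2^-1 * \sum_(c : bool) pr (err_event 0 ID prot b (seg_alloc c) X).

Lemma err_const (b : {ffun bool -> bool}) alloc alloc' : b false = b true ->
  err_event 0 ID prot b alloc X = err_event 0 ID prot b alloc' X.
Proof.
move=> hb; apply/seteqP; split => w; rewrite /err_event /=.
  by rewrite (@score_const R n ID b alloc alloc' (fun k => X k w) hb).
by rewrite (@score_const R n ID b alloc' alloc (fun k => X k w) hb).
Qed.

Lemma Delta_const (b : {ffun bool -> bool}) : b false = b true -> Delta b = 0.
Proof.
move=> hb; rewrite /Delta.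
pose e := pr (err_event 0 ID prot b (fun _ _ => false) X).
rewrite (eq_bigr (fun _ => e)); last by move=> S _; rewrite /e (err_const _ (fun _ _ => false) hb).
rewrite (eq_bigr (fun _ => e) (P := xpredT)); last by move=> c _; rewrite /e (err_const _ (fun _ _ => false) hb).
rewrite sum_constS big_bool /= mulKf ?CS_neq0 //.
lra.
Qed.

Definition mkb (x y : bool) : {ffun bool -> bool} := [ffun e : bool => if e then y else x].

Lemma Delta_sum :
  Delta (mkb false true) + Delta (mkb true false) = 2 * pr (maxD_gt_2maxA ID X) - 2^-1.
Proof.
rewrite /Delta.
have hb1 : mkb false true false != mkb false true true by rewrite !ffunE.
have hb2 : mkb true false false != mkb true false true by rewrite !ffunE.
rewrite !big_bool /= !prob_seg //.
set p := pr _.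
under eq_bigr do rewrite prob_hol.
under [X in _ + (_ * X - _)]eq_bigr do rewrite prob_hol.
have E : forall S : {set 'I_n},
  #|finset (fun i : 'I_n => mkb false true (i \notin S) && (i \in ID))|%:R / n%:R +
  #|finset (fun i : 'I_n => mkb true false (i \notin S) && (i \in ID))|%:R / n%:R
  = 2^-1 :> R.
  move=> S; rewrite -mulrDl -natrD -half_n -hID.
  rewrite -(cardsID S ID); congr (_%:R / _); rewrite addnC; congr (_ + _)%N;
    by apply: eq_card => i; rewrite !inE !ffunE; case: (i \in S); case: (i \in ID).
have -> : forall a1 a2 c : R, CS%:R^-1 * a1 - c + (CS%:R^-1 * a2 - c) =
   CS%:R^-1 * (a1 + a2) - 2 * c by move=> *; rewrite mulrDr; lra.
rewrite -big_split /=.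
rewrite (eq_bigr (fun _ => 2^-1)); last by move=> S _; exact: E.
rewrite sum_constS mulrA mulVf ?CS_neq0 // mul1r.
lra.
Qed.

Lemma sum_ffun (F : {ffun bool -> bool} -> R) :
  \sum_b F b = F (mkb true true) + F (mkb true false) + (F (mkb false true) + F (mkb false false)).
Proof.
rewrite (reindex (fun p : bool * bool => mkb p.1 p.2)) /=; last first.
  exists (fun b : {ffun bool -> bool} => (b false, b true)) => [[x y] _|b _] /=.
    by rewrite !ffunE.
  by apply/ffunP => e; rewrite ffunE; case: e.
have -> : \sum_(p : bool * bool) F (mkb p.1 p.2) = \sum_(x : bool) \sum_(y : bool) F (mkb x y).
  by rewrite pair_big.
by rewrite big_bool /= !big_bool /= addrA.
Qed.

Lemma weight_mkb (gamma : R) x y :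
  bias_weight gamma (mkb x y) = (if y then gamma else 1 - gamma) * (if x then gamma else 1 - gamma).
Proof. by rewrite /bias_weight big_bool /= !ffunE. Qed.

Lemma diff_formula (gamma : R) :
  err_hol 0 gamma ID prot X - err_seg 0 gamma ID prot X =
  gamma * (1 - gamma) / 2 * (4 * pr (maxD_gt_2maxA ID X) - 1).
Proof.
have -> : err_hol 0 gamma ID prot X - err_seg 0 gamma ID prot X =
   \sum_b bias_weight gamma b * Delta b.
  by rewrite /err_hol /err_seg -sumrB; apply: eq_bigr => b _; rewrite -mulrBr.
rewrite sum_ffun !weight_mkb [Delta (mkb true true)]Delta_const ?ffunE //.
rewrite [Delta (mkb false false)]Delta_const ?ffunE //.
have := Delta_sum.
set p := pr _; set d1 := Delta _; set d2 := Delta _.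
move=> H.
rewrite !mulr0 addr0 add0r.
have -> : gamma * (1 - gamma) / 2 * (4 * p - 1) = gamma * (1 - gamma) * (2 * p - 2^-1).
  rewrite -mulrA; congr (_ * _); rewrite mulrBr mulrA; congr (_ - _).
    by rewrite mulrAC -mulrA (_ : 4 = 2 * 2) ?mulKf //; lra.
  by rewrite mulr1.
rewrite -H; ring.
Qed.

End Main.
Unset Implicit Arguments.

Theorem theorem1 (d : measure_display) (T : measurableType d) (R : realType)
  (P : probability T R) (n : nat) (D : probability R R)
  (X : 'I_n -> {RV P >-> R}) (ID : {set 'I_n}) :
  (0 < n)%N -> ~~ odd n -> #|ID| = n./2 ->
  continuous_law_nonneg D -> iid_with_law X D ->
  forall gamma : R, 0 < gamma < 1 ->
    let prot := fun _ : 'I_2 => true in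
    let eh := err_hol 0 gamma ID prot X in
    let es := err_seg 0 gamma ID prot X in
    let p := prob P (maxD_gt_2maxA ID X) in
    eh - es = gamma * (1 - gamma) / 2 * (4 * p - 1) /\
    (es < eh <-> 4^-1 < p).
Proof.
move=> n0 ev hID hD hX gamma /andP[g0 g1] prot eh es p.
have Hd : eh - es = gamma * (1 - gamma) / 2 * (4 * p - 1).
  exact: (@diff_formula d T R P n D X ID n0 ev hID hD hX gamma).
split => //.
have -> : (es < eh) = (0 < eh - es) by rewrite subr_gt0.
rewrite Hd pmulr_rgt0; last first.
  by apply: divr_gt0 => //; apply: mulr_gt0 => //; rewrite subr_gt0.
by split => H; lra.
Qed.
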